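(* Let $\underline\phi\le\overline\phi$ and $\underline\chi\le\overline\chi$ be functions $[0,1]\to[0,1]$ satisfying (F1)–(F3). Then the pair $(C^{\mathrm{MM}}_{\underline\phi,\overline\chi},C^{\mathrm{MM}}_{\overline\phi,\underline\chi})$ is an imprecise copula which is coherent, i.e. with $\mathcal C=\{C: C \text{ a copula}, C^{\mathrm{MM}}_{\underline\phi,\overline\chi}\le C\le C^{\mathrm{MM}}_{\overline\phi,\underline\chi}\}$ one has $C^{\mathrm{MM}}_{\underline\phi,\overline\chi}=\inf_{C\in\mathcal C}C$ and $C^{\mathrm{MM}}_{\overline\phi,\underline\chi}=\sup_{C\in\mathcal C}C$ pointwise.
   Context: (F1) $\phi(0)=\chi(0)=0$, $\phi(1)=\chi(1)=1$; (F2) $\phi,\chi$ non-decreasing; (F3) $\phi(u)/u$ on $(0,1]$ and $\frac{1-\chi(w)}{w-\chi(w)}$ on $[0,1]$ (values in $[1,\infty]$) non-increasing. $C^{\mathrm{MM}}_{\phi,\chi}(u,w)=uw+\min\{u(1-w),(\phi(u)-u)(w-\chi(w))\}$. A copula is $C:[0,1]^2\to[0,1]$ with $C(u,0)=C(0,v)=0$, $C(u,1)=u$, $C(1,v)=v$, and $C(u_2,v_2)-C(u_1,v_2)-C(u_2,v_1)+C(u_1,v_1)\ge0$ for $u_1\le u_2$, $v_1\le v_2$. An imprecise copula is a pair $(\underline C,\overline C)$ of maps $[0,1]^2\to[0,1]$ both satisfying the boundary conditions of a copula and, for all $u_1\le u_2$, $v_1\le v_2$: $\underline C(u_2,v_2)+\overline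 C(u_1,v_1)-\underline C(u_2,v_1)-\underline C(u_1,v_2)\ge0$; $\overline C(u_2,v_2)+\underline C(u_1,v_1)-\underline C(u_2,v_1)-\underline C(u_1,v_2)\ge0$; $\overline C(u_2,v_2)+\overline C(u_1,v_1)-\overline C(u_2,v_1)-\underline C(u_1,v_2)\ge0$; $\overline C(u_2,v_2)+\overline C(u_1,v_1)-\underline C(u_2,v_1)-\overline C(u_1,v_2)\ge0$. *)

(* Defs.v *)
From Stdlib Require Import Reals.
From Coquelicot Require Import Rbar.
Open Scope R_scope.

Definition in01 (x : R) : Prop := 0 <= x <= 1.

Definition maps01 (f : R -> R) : Prop := forall x, in01 x -> in01 (f x).

Definition F1 (phi chi : R -> R) : Prop :=
  phi 0 = 0 /\ chi 0 = 0 /\ phi 1 = 1 /\ chi 1 = 1.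

Definition F2 (phi chi : R -> R) : Prop :=
  (forall x y, in01 x -> in01 y -> x <= y -> phi x <= phi y) /\
  (forall x y, in01 x -> in01 y -> x <= y -> chi x <= chi y).

(* the [1,+oo]-valued quotient (1 - chi w)/(w - chi w); value +oo when the
   denominator vanishes *)
Definition chi_ratio (chi : R -> R) (w : R) : Rbar :=
  if Req_EM_T (w - chi w) 0 then p_infty
  else Finite ((1 - chi w) / (w - chi w)).

(* (F3): phi(u)/u non-increasing on (0,1]; the chi-quotient takes values in
   [1,+oo] and is non-increasing (on [0,1), the point w = 1 giving 0/0) *)
Definition F3 (phi chi : R -> R) : Prop :=
  (forall x y, 0 < x -> x <= y -> y <= 1 -> phi y / y <= phi x / x) /\
  (forall w, 0 <= w < 1 -> Rbar_le (Finite 1) (chi_ratio chi w)) /\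
  (forall x y, 0 <= x -> x <= y -> y < 1 ->
     Rbar_le (chi_ratio chi y) (chi_ratio chi x)).

Definition admissible (phi chi : R -> R) : Prop :=
  maps01 phi /\ maps01 chi /\ F1 phi chi /\ F2 phi chi /\ F3 phi chi.

Definition CMM (phi chi : R -> R) (u w : R) : R :=
  u * w + Rmin (u * (1 - w)) ((phi u - u) * (w - chi w)).

Definition copula_boundary (C : R -> R -> R) : Prop :=
  (forall u v, in01 u -> in01 v -> in01 (C u v)) /\
  (forall u, in01 u -> C u 0 = 0 /\ C 0 u = 0 /\ C u 1 = u /\ C 1 u = u).

Definition is_copula (C : R -> R -> R) : Prop :=
  copula_boundary C /\
  (forall u1 u2 v1 v2, in01 u1 -> in01 u2 -> in01 v1 -> in01 v2 ->
     u1 <= u2 -> v1 <= v2 ->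
     C u2 v2 - C u1 v2 - C u2 v1 + C u1 v1 >= 0).

Definition is_imprecise_copula (Cl Cu : R -> R -> R) : Prop :=
  copula_boundary Cl /\ copula_boundary Cu /\
  (forall u1 u2 v1 v2, in01 u1 -> in01 u2 -> in01 v1 -> in01 v2 ->
     u1 <= u2 -> v1 <= v2 ->
     Cl u2 v2 + Cu u1 v1 - Cl u2 v1 - Cl u1 v2 >= 0 /\
     Cu u2 v2 + Cl u1 v1 - Cl u2 v1 - Cl u1 v2 >= 0 /\
     Cu u2 v2 + Cu u1 v1 - Cu u2 v1 - Cl u1 v2 >= 0 /\
     Cu u2 v2 + Cu u1 v1 - Cl u2 v1 - Cu u1 v2 >= 0).

Definition is_inf (S : R -> Prop) (m : R) : Prop :=
  (forall y, S y -> m <= y) /\ (forall b, (forall y, S y -> b <= y) -> b <= m).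
Definition is_sup (S : R -> Prop) (m : R) : Prop :=
  (forall y, S y -> y <= m) /\ (forall b, (forall y, S y -> y <= b) -> m <= b).

Definition between_copulas (Cl Cu : R -> R -> R) (C : R -> R -> R) : Prop :=
  is_copula C /\
  (forall u v, in01 u -> in01 v -> Cl u v <= C u v /\ C u v <= Cu u v).

Definition coherent (Cl Cu : R -> R -> R) : Prop :=
  forall u v, in01 u -> in01 v ->
    is_inf (fun y => exists C, between_copulas Cl Cu C /\ y = C u v) (Cl u v) /\
    is_sup (fun y => exists C, between_copulas Cl Cu C /\ y = C u v) (Cu u v).

(* Main.v *)
Require Import Defs.
From Stdlib Require Import Reals Lra Psatz.
From Coquelicot Require Import Rbar.
Open Scope R_scope.
Section S.
Variables P1 Q1 P2 Q2 : R.
Hypotheses (h1 : 0 <= P2) (h2 : P2 <= P1) (h3 : 0 <= Q1) (h4 : 0 <= Q2)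
  (h5 : P2 - Q2 <= P1 - Q1) (h6 : 0 <= P2 - Q2) (h7 : P2*Q1 <= P1*Q2).
Definition Hf k := Rmax 0 (P1 - k*Q1) - Rmax 0 (P2 - k*Q2).

Lemma sign12 k : 0 <= k -> 0 < P2 - k*Q2 -> 0 <= P1 - k*Q1.
Proof.
intros hk hA.
destruct (Rle_dec 0 (P1 - k*Q1)) as [|hn]; [auto|exfalso].
assert (Q1 > 0) by nra.
assert (Q1*(P2 - k*Q2) <= 0) by nra. nra.
Qed.

Lemma Hnn k : 1 <= k -> 0 <= Hf k.
Proof.
intros hk. unfold Hf, Rmax.
destruct (Rle_dec 0 (P1 - k*Q1)); destruct (Rle_dec 0 (P2 - k*Q2)).
- destruct (Rle_dec Q1 Q2). nra.
  destruct (Rle_dec Q2 0).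
  + assert (Q2 = 0) by lra. subst. destruct (Rle_dec P2 0). nra. 
    assert (Q1 = 0) by nra. nra.
  + assert (Q2*((P1-P2) - k*(Q1-Q2)) >= 0) by nra. nra.
- lra.
- destruct (Rle_dec (P2 - k*Q2) 0). lra. pose proof (sign12 k). lra.
- lra.
Qed.

Lemma Hanti k1 k2 : Q2 <= Q1 -> 1 <= k2 -> k2 <= k1 -> Hf k1 <= Hf k2.
Proof.
intros hq hk hkk. unfold Hf, Rmax.
pose proof (sign12 k1). pose proof (sign12 k2).
destruct (Rle_dec 0 (P1 - k1*Q1)); destruct (Rle_dec 0 (P2 - k1*Q2));
destruct (Rle_dec 0 (P1 - k2*Q1)); destruct (Rle_dec 0 (P2 - k2*Q2)); try nra.
all: pose proof (Hnn k2 hk); unfold Hf, Rmax in *;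
  destruct (Rle_dec 0 (P1 - k2*Q1)); destruct (Rle_dec 0 (P2 - k2*Q2)); lra.
Qed.

Lemma HleL k : Q1 < Q2 -> 1 <= k -> Hf k <= (P1 - P2) + k*(Q2 - Q1).
Proof.
intros hq hk. unfold Hf, Rmax. pose proof (sign12 k).
destruct (Rle_dec 0 (P1 - k*Q1)); destruct (Rle_dec 0 (P2 - k*Q2)); try nra.
Qed.

Lemma HeqL k : 0 < Q2 -> 0 <= P2 - k*Q2 -> 0 <= k -> Hf k = (P1 - P2) + k*(Q2 - Q1).
Proof.
intros hQ hA hk. unfold Hf, Rmax.
destruct (Rle_dec 0 (P2 - k*Q2)); [|lra].
destruct (Rlt_le_dec 0 (P2 - k*Q2)) as [hp|hp].
- pose proof (sign12 k hk hp). destruct (Rle_dec 0 (P1 - k*Q1)); lra.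
- destruct (Rle_dec 0 (P1 - k*Q1)); try lra.
  assert (P2 = k*Q2) by lra. nra.
Qed.

Lemma key x1 k1 x2 k2 :
  0 < x1 -> x1 <= x2 -> 1 <= k2 -> k2 <= k1 -> x1*k1 <= x2*k2 ->
  x1 * Hf k1 <= x2 * Hf k2.
Proof.
intros.
pose proof (Hnn k1 ltac:(lra)). pose proof (Hnn k2 ltac:(lra)).
destruct (Rle_dec Q2 Q1).
- pose proof (Hanti k1 k2 r ltac:(lra) ltac:(lra)). nra.
- destruct (Rle_dec 0 (P2 - k2*Q2)).
  + rewrite (HeqL k2 ltac:(lra) r ltac:(lra)).
    pose proof (HleL k1 ltac:(lra) ltac:(lra)). nra.
  + assert (Hf k1 <= Hf k2).
    { unfold Hf, Rmax.
      destruct (Rle_dec 0 (P1 - k1*Q1)); destruct (Rle_dec 0 (P2 - k1*Q2));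
      destruct (Rle_dec 0 (P1 - k2*Q1)); destruct (Rle_dec 0 (P2 - k2*Q2)); try nra. }
    nra.
Qed.
End S.

Lemma phi_ge phi chi u : admissible phi chi -> in01 u -> u <= phi u.
Proof.
intros [m1 [m2 [[f0 [f1 [f2 f3]]] [F2' [r1 [r2 r3]]]]]] [hu0 hu1].
destruct (Rle_lt_or_eq_dec 0 u hu0) as [hp|he].
- pose proof (r1 u 1 hp hu1 (Rle_refl 1)) as H. rewrite f2 in H.
  assert (h1 : 1 <= phi u / u) by lra.
  apply (Rmult_le_compat_r u) in h1; [|lra].
  unfold Rdiv in h1. rewrite Rmult_assoc, Rinv_l in h1; lra.
- subst. lra.
Qed.

Lemma chi_le phi chi w : admissible phi chi -> in01 w -> chi w <= w.
Proof.
intros [m1 [m2 [[f0 [f1 [f2 f3]]] [F2' [r1 [r2 r3]]]]]] [hw0 hw1].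
destruct (Rle_lt_or_eq_dec w 1 hw1) as [hl|he].
- pose proof (r2 w (conj hw0 hl)) as H. unfold chi_ratio in H.
  destruct (Req_EM_T (w - chi w) 0). lra.
  simpl in H. destruct (Rle_dec (chi w) w) as [|hn]; auto. exfalso.
  assert (chi w <= 1) by (apply (m2 w); split; lra).
  assert ((1 - chi w) / (w - chi w) <= 0) as H1.
  { unfold Rdiv. assert (/ (w - chi w) < 0) by (apply Rinv_lt_0_compat; lra). nra. }
  lra.
- subst. lra.
Qed.

Lemma chi_ratio_ineq phi chi w1 w2 : admissible phi chi -> 0 <= w1 -> w1 <= w2 -> w2 <= 1 ->
  (1 - chi w2)*(w1 - chi w1) <= (1 - chi w1)*(w2 - chi w2).
Proof.
intros hA h1 h2 h3.
pose proof (chi_le _ _ w1 hA (conj h1 (Rle_trans _ _ _ h2 h3))) as c1.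
pose proof (chi_le _ _ w2 hA (conj (Rle_trans _ _ _ h1 h2) h3)) as c2.
destruct hA as [m1 [m2 [[f0 [f1 [f2 f3]]] [[F2a F2b] [r1 [r2 r3]]]]]].
assert (H : chi w2 <= 1) by (apply (m2 w2); split; lra).
assert (H0 : chi w1 <= chi w2) by (apply F2b; try split; lra).
destruct (Rle_lt_or_eq_dec w2 1 h3) as [hl|he].
- pose proof (r3 w1 w2 h1 h2 hl) as H1. unfold chi_ratio in H1.
  destruct (Req_EM_T (w2 - chi w2) 0) as [e2|e2];
  destruct (Req_EM_T (w1 - chi w1) 0) as [e1|e1]; simpl in H1.
  + rewrite e1, e2. lra.
  + contradiction.
  + rewrite e1. nra.
  + assert (0 < w1 - chi w1) by lra. assert (0 < w2 - chi w2) by lra.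
    apply (Rmult_le_compat_r ((w1 - chi w1)*(w2 - chi w2))) in H1; [|nra].
    field_simplify in H1; lra.
- subst. rewrite f3. lra.
Qed.

Lemma CMM_eq phi chi u w :
  CMM phi chi u w = u - Rmax 0 (u*(1 - chi w) - phi u * (w - chi w)).
Proof.
unfold CMM, Rmin, Rmax.
destruct (Rle_dec (u * (1 - w)) ((phi u - u) * (w - chi w)));
destruct (Rle_dec 0 (u*(1 - chi w) - phi u * (w - chi w))); nra.
Qed.

Lemma CMM_copula phi chi : admissible phi chi -> is_copula (CMM phi chi).
Proof.
intros hA.
pose proof hA as [m1 [m2 [[f0 [f1 [f2 f3]]] [[F2a F2b] [r1 [r2 r3]]]]]].
split; [split|].
- intros u v hu hv.
  pose proof (phi_ge _ _ u hA hu). pose proof (chi_le _ _ v hA hv).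
  destruct hu, hv.
  split.
  + unfold CMM, Rmin. destruct (Rle_dec _ _); nra.
  + rewrite CMM_eq. pose proof (Rmax_l 0 (u*(1 - chi v) - phi u * (v - chi v))). lra.
- intros u hu. unfold CMM. rewrite f0, f1, f2, f3.
  pose proof (phi_ge _ _ u hA hu). destruct hu.
  unfold Rmin. repeat split; destruct (Rle_dec _ _); nra.
- intros u1 u2 v1 v2 hu1 hu2 hv1 hv2 hu hv.
  rewrite !CMM_eq.
  set (P1 := 1 - chi v1). set (Q1 := v1 - chi v1).
  set (P2 := 1 - chi v2). set (Q2 := v2 - chi v2).
  pose proof (chi_le _ _ v1 hA hv1). pose proof (chi_le _ _ v2 hA hv2).
  assert (chi v2 <= 1) by (apply (m2 v2); auto).
  assert (chi v1 <= chi v2) by (apply F2b; auto).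
  pose proof (chi_ratio_ineq _ _ v1 v2 hA (proj1 hv1) hv (proj2 hv2)).
  destruct hv1, hv2.
  assert (h1 : 0 <= P2) by (unfold P2; lra).
  assert (h2 : P2 <= P1) by (unfold P1, P2; lra).
  assert (h3 : 0 <= Q1) by (unfold Q1; lra).
  assert (h4 : 0 <= Q2) by (unfold Q2; lra).
  assert (h5 : P2 - Q2 <= P1 - Q1) by (unfold P1, P2, Q1, Q2; lra).
  assert (h6 : 0 <= P2 - Q2) by (unfold P2, Q2; lra).
  assert (h7 : P2*Q1 <= P1*Q2) by (unfold P1, P2, Q1, Q2; lra).
  assert (Ex : forall u, 0 < u -> u <= 1 ->
     Rmax 0 (u*P1 - phi u * Q1) - Rmax 0 (u*P2 - phi u * Q2) = u * Hf P1 Q1 P2 Q2 (phi u / u)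
     /\ 1 <= phi u / u).
  { intros u hu0 hu1'. assert (HH5 : phi u = u * (phi u / u)) by (field; lra).
    set (k := phi u / u) in *. rewrite HH5.
    split.
    - unfold Hf.
      assert (HH6 : forall a, Rmax 0 (u*a) = u * Rmax 0 a).
      { intros a. unfold Rmax. destruct (Rle_dec 0 (u*a)); destruct (Rle_dec 0 a); nra. }
      replace (u*P1 - u*k*Q1) with (u*(P1 - k*Q1)) by ring.
      replace (u*P2 - u*k*Q2) with (u*(P2 - k*Q2)) by ring.
      rewrite !HH6. ring.
    - pose proof (phi_ge _ _ u hA (conj (Rlt_le _ _ hu0) hu1')). nra. }
  destruct hu1 as [a1 b1]. destruct hu2 as [a2 b2].
  destruct (Rle_lt_or_eq_dec 0 u1 a1) as [p1|e1].
  + destruct (Ex u1 p1 b1) as [E1 K1]. destruct (Ex u2 ltac:(lra) b2) as [E2 K2].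
    assert (HH5 : phi u2 / u2 <= phi u1 / u1) by (apply r1; lra).
    assert (phi u1 <= phi u2) by (apply F2a; try split; lra).
    assert (HH7 : u1 * (phi u1 / u1) <= u2 * (phi u2 / u2)).
    { replace (u1 * (phi u1 / u1)) with (phi u1) by (field; lra).
      replace (u2 * (phi u2 / u2)) with (phi u2) by (field; lra). lra. }
    pose proof (key P1 Q1 P2 Q2 h1 h2 h3 h4 h5 h6 h7 u1 (phi u1 / u1) u2 (phi u2/u2)
       p1 hu K2 HH5 HH7).
    lra.
  + subst u1. rewrite f0.
    replace (0 * P1 - 0 * Q1) with 0 by ring. replace (0 * P2 - 0 * Q2) with 0 by ring.
    destruct (Rle_lt_or_eq_dec 0 u2 a2) as [p2|e2].
    * destruct (Ex u2 p2 b2) as [E2 K2].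
      pose proof (Hnn P1 Q1 P2 Q2 h1 h2 h3 h4 h5 h6 h7 _ K2).
      assert (R0 : Rmax 0 0 = 0) by (unfold Rmax; destruct (Rle_dec 0 0); lra).
      rewrite R0. nra.
    * subst u2. 
      rewrite f0. replace (0 * P1 - 0 * Q1) with 0 by ring. replace (0 * P2 - 0 * Q2) with 0 by ring.
      lra.
Qed.

Lemma CMM_mono phil phiu chil chiu u w :
  admissible phil chiu -> admissible phiu chil ->
  (forall x, in01 x -> phil x <= phiu x) ->
  (forall x, in01 x -> chil x <= chiu x) -> in01 u -> in01 w ->
  CMM phil chiu u w <= CMM phiu chil u w.
Proof.
intros A1 A2 hp hc hu hw.
pose proof (phi_ge _ _ u A1 hu). pose proof (chi_le _ _ w A1 hw).
pose proof (hp u hu). pose proof (hc w hw).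
unfold CMM, Rmin.
assert ((phil u - u) * (w - chiu w) <= (phiu u - u) * (w - chil w)) by nra.
destruct (Rle_dec _ _); destruct (Rle_dec _ _); lra.
Qed.

Theorem corollary3 (phil phiu chil chiu : R -> R) :
  admissible phil chil -> admissible phil chiu ->
  admissible phiu chil -> admissible phiu chiu ->
  (forall x, in01 x -> phil x <= phiu x) ->
  (forall x, in01 x -> chil x <= chiu x) ->
  is_imprecise_copula (CMM phil chiu) (CMM phiu chil) /\
  coherent (CMM phil chiu) (CMM phiu chil).
Proof.
intros A1 A2 A3 A4 hp hc.
pose proof (CMM_copula _ _ A2) as [bl il].
pose proof (CMM_copula _ _ A3) as [bu iu].
assert (M : forall u w, in01 u -> in01 w -> CMM phil chiu u w <= CMM phiu chil u w)
  by (intros; apply CMM_mono; auto).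
split.
- split; [exact bl|]. split; [exact bu|].
  intros u1 u2 v1 v2 h1 h2 h3 h4 h5 h6.
  pose proof (il u1 u2 v1 v2 h1 h2 h3 h4 h5 h6).
  pose proof (iu u1 u2 v1 v2 h1 h2 h3 h4 h5 h6).
  pose proof (M u1 v1 h1 h3). pose proof (M u2 v2 h2 h4).
  pose proof (M u1 v2 h1 h4). pose proof (M u2 v1 h2 h3).
  lra.
- intros u v hu hv. split; split.
  + intros y [C [[_ HC] ->]]. apply (HC u v hu hv).
  + intros b Hb. apply Hb. exists (CMM phil chiu). split; [|reflexivity].
    split; [split; auto|]. intros; split; [lra|apply M; auto].
  + intros y [C [[_ HC] ->]]. apply (HC u v hu hv).
  + intros b Hb. apply Hb. exists (CMM phiu chil). split; [|reflexivity].
    split; [split; auto|]. intros; split; [apply M; auto|lra].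
Qed.
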